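(* Let $G=\{G_1,\dots,G_K\}$ be a partition of $[p]$ into nonempty groups, $m=\min_k|G_k|$, and let $\Gamma$ be a $p\times p$ diagonal matrix with $\Gamma_{aa}=\gamma_k$ for all $a\in G_k$, $k=1,\dots,K$. Then for every $B\in\mathcal{C}$, $$\langle\Gamma,B^*-B\rangle\ \ge\ -\frac{\max_k\gamma_k-\min_k\gamma_k}{m}\sum_{j\neq k}|B_{G_jG_k}|_1.$$
   Context: $B_{G_jG_k}=(B_{ab})_{a\in G_j,b\in G_k}$ and $|M|_1$ denotes the sum of the absolute values of the entries of $M$. $\langle M,N\rangle=\mathrm{tr}(M^tN)$. $B^*$ is the $p\times p$ matrix with $B^*_{ab}=1/|G_k|$ if $a,b\in G_k$, and $0$ otherwise. $\mathcal{C}$ is the set of symmetric positive semidefinite $p\times p$ matrices $B$ with $\sum_aB_{ab}=1$ for all $b$, $B_{ab}\ge0$ for all $a,b$, and $\mathrm{tr}(B)=K$. *)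

(* Defs.v *)
From HB Require Import structures.
From mathcomp Require Import all_boot all_order all_algebra.
Set Implicit Arguments. Unset Strict Implicit. Unset Printing Implicit Defensive.
Import Order.TTheory GRing.Theory Num.Theory.
Local Open Scope ring_scope.

(* The partition G = {G_1,...,G_K} of [p] is encoded by a labelling
   g : 'I_p -> 'I_K ; G_k = grp g k. *)
Definition grp (p K : nat) (g : 'I_p -> 'I_K) (k : 'I_K) : {set 'I_p} :=
  [set a | g a == k].

(* m = min_k |G_k|  (k0 is any group index, used as the seed of the fold) *)
Definition min_size (p K : nat) (g : 'I_p -> 'I_K) (k0 : 'I_K) : nat :=
  \big[minn/#|grp g k0|]_(k < K) #|grp g k|.

Definition gmax (R : realFieldType) (K : nat) (gamma : 'I_K -> R) (k0 : 'I_K) : R :=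
  \big[Num.max/gamma k0]_(k < K) gamma k.
Definition gmin (R : realFieldType) (K : nat) (gamma : 'I_K -> R) (k0 : 'I_K) : R :=
  \big[Num.min/gamma k0]_(k < K) gamma k.

Definition Gamma (R : realFieldType) (p K : nat) (g : 'I_p -> 'I_K)
  (gamma : 'I_K -> R) : 'M[R]_p := diag_mx (\row_a gamma (g a)).

Definition Bstar (R : realFieldType) (p K : nat) (g : 'I_p -> 'I_K) : 'M[R]_p :=
  \matrix_(a, b) (if g a == g b then (#|grp g (g a)|%:R)^-1 else 0).

Definition frob (R : realFieldType) (p : nat) (M N : 'M[R]_p) : R := \tr (M^T *m N).

Definition psd (R : realFieldType) (p : nat) (B : 'M[R]_p) : Prop :=
  forall x : 'cV[R]_p, 0 <= (x^T *m B *m x) 0 0.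

Definition inC (R : realFieldType) (p K : nat) (B : 'M[R]_p) : Prop :=
  [/\ B^T = B, psd B,
      forall b : 'I_p, \sum_(a < p) B a b = 1,
      forall a b : 'I_p, 0 <= B a b
    & \tr B = K%:R].

Definition blockL1 (R : realFieldType) (p K : nat) (g : 'I_p -> 'I_K)
  (B : 'M[R]_p) (j k : 'I_K) : R :=
  \sum_(a in grp g j) \sum_(b in grp g k) `|B a b|.

(* Main.v *)
Require Import Defs.
From HB Require Import structures.
From mathcomp Require Import all_boot all_order all_algebra.
From mathcomp Require Import ring lra.
Import Order.TTheory GRing.Theory Num.Theory.
Local Open Scope ring_scope.

Lemma frobE (R : realFieldType) (p K : nat) (g : 'I_p -> 'I_K)
  (gamma : 'I_K -> R) (M : 'M[R]_p) :
  frob (Gamma g gamma) M = \sum_a gamma (g a) * M a a.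
Proof.
rewrite /frob /Gamma tr_diag_mx mul_diag_mx /mxtrace; apply: eq_bigr => a _.
by rewrite !mxE.
Qed.

Lemma group_sum (R : realFieldType) (p K : nat) (g : 'I_p -> 'I_K) (F : 'I_p -> R) :
  \sum_a F a = \sum_k \sum_(a in grp g k) F a.
Proof.
rewrite (partition_big g xpredT) //; apply: eq_bigr => k _; apply: eq_bigl => a.
by rewrite inE.
Qed.

Lemma gmax_ge (R : realFieldType) (K : nat) (gamma : 'I_K -> R) k0 k :
  gamma k <= gmax gamma k0.
Proof. exact: le_bigmax. Qed.
Lemma gmin_le (R : realFieldType) (K : nat) (gamma : 'I_K -> R) k0 k :
  gmin gamma k0 <= gamma k.
Proof. exact: bigmin_le. Qed.

Lemma minn_seq_le (I : eqType) (r : seq I) (F : I -> nat) x0 k :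
  k \in r -> (\big[minn/x0]_(i <- r) F i <= F k)%N.
Proof.
elim: r => [//|a r IH]; rewrite inE big_cons => /orP [/eqP -> | /IH H].
  by rewrite geq_minl.
by rewrite (leq_trans (geq_minr _ _) H).
Qed.

Lemma min_size_le (p K : nat) (g : 'I_p -> 'I_K) k0 k :
  (min_size g k0 <= #|grp g k|)%N.
Proof. by rewrite /min_size; apply: minn_seq_le; rewrite mem_index_enum. Qed.

Lemma min_size_gt0 (p K : nat) (g : 'I_p -> 'I_K) k0
  (Hne : forall k : 'I_K, grp g k != set0) : (0 < min_size g k0)%N.
Proof.
rewrite /min_size; apply: (big_ind (fun x => 0 < x)%N).
- by rewrite card_gt0 Hne.
- by move=> x y hx hy; rewrite leq_min hx hy.
- by move=> k _; rewrite card_gt0 Hne.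
Qed.

Lemma pair_entry (R : realFieldType) (p : nat) (A : 'M[R]_p) (a b : 'I_p) :
  (delta_mx (0:'I_1) a *m A *m delta_mx b (0:'I_1)) 0 0 = A a b.
Proof. by rewrite -rowE -colE !mxE. Qed.

Lemma psd_pair (R : realFieldType) (p : nat) (A : 'M[R]_p) (a b : 'I_p) :
  psd A -> A a b + A b a <= A a a + A b b.
Proof.
move=> H; have := H (delta_mx a 0 - delta_mx b 0 : 'cV[R]_p).
rewrite mulmxBr [(_ - _)^T]linearB /= !trmx_delta !mulmxBl -!rowE -!colE !mxE.
move=> h; rewrite -subr_ge0; apply: (le_trans h); lra.
Qed.

Lemma psd_block (R : realFieldType) (p : nat) (A : 'M[R]_p) (S : {set 'I_p}) :
  psd A -> \sum_(a in S) \sum_(b in S) A a b <= #|S|%:R * \sum_(a in S) A a a.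
Proof.
move=> HA.
have E1 : \sum_(a in S) \sum_(b in S) (A a b + A b a) =
          2%:R * \sum_(a in S) \sum_(b in S) A a b.
  under eq_bigr do rewrite big_split /=.
  rewrite big_split /= [X in _ + X]exchange_big /=.
  by rewrite mulr2n mulrDl mul1r.
have E2 : \sum_(a in S) \sum_(b in S) (A a a + A b b) =
          2%:R * (#|S|%:R * \sum_(a in S) A a a).
  under eq_bigr do rewrite big_split /= sumr_const.
  rewrite big_split /= sumr_const mulr_sumr.
  rewrite -mulr_sumr sumrMnl -mulr_natl.
  set T := \sum_(i in S) A i i.
  rewrite -mulr_natl; clearbody T; generalize (#|S|%:R : R) => n; ring.
have : \sum_(a in S) \sum_(b in S) (A a b + A b a) <=
       \sum_(a in S) \sum_(b in S) (A a a + A b b).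
  by apply: ler_sum => a _; apply: ler_sum => b _; exact: psd_pair.
rewrite E1 E2 => h.
have h2 : (0:R) < 2%:R by [].
by rewrite -(ler_pM2l h2).
Qed.

Lemma off_mass (R : realFieldType) (p K : nat) (g : 'I_p -> 'I_K)
  (B : 'M[R]_p) (k : 'I_K)
  (Hcol : forall b : 'I_p, \sum_(a < p) B a b = 1)
  (Hpos : forall a b : 'I_p, 0 <= B a b) (Hpsd : psd B) :
  (1 - \sum_(a in grp g k) B a a) * #|grp g k|%:R <=
  \sum_(j < K | j != k) blockL1 g B j k.
Proof.
have E1 : \sum_(j < K | j != k) blockL1 g B j k =
          \sum_(a < p | g a != k) \sum_(b in grp g k) B a b.
  rewrite (partition_big g (fun j => j != k)) //=.
  apply: eq_bigr => j jk; rewrite /blockL1; apply: eq_big.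
    move=> a; rewrite inE; case: (eqVneq (g a) j) => [->|]; by rewrite ?jk ?andbF.
  by move=> a _; apply: eq_bigr => b _; rewrite ger0_norm.
have E2 : forall b, \sum_(a < p | g a != k) B a b = 1 - \sum_(a in grp g k) B a b.
  move=> b; rewrite -(Hcol b) [in RHS](bigID (fun a => g a == k)) /=.
  have -> : \sum_(a in grp g k) B a b = \sum_(a < p | g a == k) B a b.
    by apply: eq_bigl => a; rewrite inE.
  by rewrite addrC addrK.
have E3 : \sum_(a < p | g a != k) \sum_(b in grp g k) B a b =
          \sum_(b in grp g k) (1 - \sum_(a in grp g k) B a b).
  rewrite exchange_big; apply: eq_bigr => b _; exact: E2.
rewrite E1 E3.
rewrite sumrB sumr_const exchange_big /=.
have := @psd_block R p B (grp g k) Hpsd.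
set S := \sum_(a in grp g k) \sum_(b in grp g k) B a b.
set T := \sum_(a in grp g k) B a a.
move=> h; rewrite -mulr_natr mul1r mulrBl mul1r lerD2l lerN2 mulrC //.
Qed.

Lemma arith (R : realFieldType) (m n d o gmx gmn ga : R) :
  0 < m -> m <= n -> d * n <= o -> 0 <= o -> gmn <= ga -> ga <= gmx ->
  - ((gmx - gmn) / m) * o <= (ga - gmx) * d.
Proof.
move=> hm hmn hdo ho h1 h2.
set r := (gmx - gmn) / m.
have hr : r * m = gmx - gmn by rewrite /r mulfVK // gt_eqF.
have hr0 : 0 <= r by rewrite /r divr_ge0 // ?subr_ge0 ?(le_trans h1 h2) // ltW.
clearbody r.
have [hd|hd] := lerP d 0.
  have : 0 <= (ga - gmx) * d by rewrite mulr_le0 // subr_le0.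
  have : 0 <= r * o by rewrite mulr_ge0.
  lra.
have e1 : (gmn - gmx) * d <= (ga - gmx) * d by rewrite ler_pM2r // lerD2r.
have e2 : r * (m * d) <= r * (n * d) by rewrite ler_wpM2l // ler_pM2r.
have e3 : r * (n * d) <= r * o by rewrite ler_wpM2l // mulrC.
have e4 : (gmn - gmx) * d = - (r * (m * d)) by rewrite mulrA hr; ring.
lra.
Qed.

Theorem mainTheorem6 (R : realFieldType) (p K : nat) (g : 'I_p -> 'I_K)
  (k0 : 'I_K) (gamma : 'I_K -> R)
  (Hne : forall k : 'I_K, grp g k != set0)
  (B : 'M[R]_p) (HB : inC K B) :
  frob (Gamma g gamma) (Bstar R g - B) >=
  - ((gmax gamma k0 - gmin gamma k0) / (min_size g k0)%:R) *
    \sum_(j < K) \sum_(k < K | j != k) blockL1 g B j k.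
Proof.
case: HB => Hsym Hpsd Hcol Hpos Htr.
set tr := fun k => \sum_(a in grp g k) B a a.
have Hn : forall k, (#|grp g k|%:R : R) != 0.
  by move=> k; rewrite pnatr_eq0 -lt0n card_gt0 Hne.
have EF : frob (Gamma g gamma) (Bstar R g - B) = \sum_k gamma k * (1 - tr k).
  rewrite frobE (@group_sum R p K g); apply: eq_bigr => k _.
  rewrite (eq_bigr (fun a => gamma k * (#|grp g k|%:R)^-1 - gamma k * B a a)); last first.
    move=> a; rewrite inE => /eqP ga; rewrite !mxE eqxx ga; ring.
  rewrite sumrB sumr_const -(mulr_natr (gamma k / #|grp g k|%:R)) -mulrA mulVf //.
  by rewrite mulr1 /tr /= mulrBr mulr1 mulr_sumr.
have ET : \sum_k tr k = K%:R by rewrite -Htr /mxtrace (@group_sum R p K g).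
have Esum : \sum_(j < K) \sum_(k < K | j != k) blockL1 g B j k =
            \sum_(k < K) \sum_(j < K | j != k) blockL1 g B j k.
  under eq_bigr do rewrite big_mkcond.
  rewrite exchange_big; apply: eq_bigr => k _; rewrite [RHS]big_mkcond.
  by apply: eq_bigr => j _.
rewrite EF Esum mulr_sumr.
have -> : \sum_k gamma k * (1 - tr k) = \sum_k (gamma k - gmax gamma k0) * (1 - tr k).
  have h0 : \sum_k (1 - tr k) = 0.
    by rewrite sumrB ET sumr_const card_ord subrr.
  rewrite (eq_bigr (fun k => (gamma k - gmax gamma k0) * (1 - tr k) +
                             gmax gamma k0 * (1 - tr k))); last by move=> k _; ring.
  by rewrite big_split /= -mulr_sumr h0 mulr0 addr0.
apply: ler_sum => k _; apply: (@arith R _ (#|grp g k|%:R)).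
- by rewrite ltr0n min_size_gt0.
- by rewrite ler_nat min_size_le.
- exact: off_mass.
- apply: sumr_ge0 => j _; rewrite /blockL1; apply: sumr_ge0 => a _.
  by apply: sumr_ge0 => b _.
- exact: gmin_le.
- exact: gmax_ge.
Qed.
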